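(* The doctrine of variations $\Psi_{\mathbf{PAsm}}:\mathbf{PAsm}^{op}\to\mathbf{InfSL}$ is a weak hyperdoctrine which satisfies the Rule of Choice and the Axiom of Choice on every object, and it is arithmetic.
   Context: $\mathbf{PAsm}$ is the category of partitioned assemblies: objects $(P,T)$ with $P$ a set and $T:P\to\mathbb N$ a function; arrows $f:(P,T)\to(P',T')$ are functions $f:P\to P'$ such that for some $t$, for all $x$, $\varphi_t(T(x))$ is defined and equals $T'(f(x))$ ($\varphi_t$ the $t$-th partial recursive function). It has finite limits, finite coproducts, weak exponentials and the parameterized natural number object $(\mathbb N,\mathrm{id})$. For a category $\mathcal C$ with finite products and weak pullbacks, $\Psi_{\mathcal C}$ sends $A$ to the poset reflection of the slice $\mathcal C/A$ and acts on arrows by weak pullback. An elementary doctrine on a category $\mathcal C$ with finite products is a functor $P:\mathcal C^{op}\to\mathbf{InfSL}$ with, for each $A$, $\delta_A\in P(A\times A)$ such that $\alpha\mapsto P_{\langle pr_1,pr_2\rangle}(\alpha)\wedge P_{\langle pr_2,pr_3\rangle}(\delta_A)$ is left adjoint to $P_{\langle pr_1,pr_2,pr_2\rangle}:P(X\times A\times A)\to P(X\times A)$ for all $X$. A weak hyperdoctrine is an elementary doctrine such that $\mathcal C$ is weakly cartesian closed (weak exponentials $W$ with weak evaluation $ev:W\times A\to B$ through which every $C\times A\to B$ factors as $ev\circ(g\times\mathrm{id})$ for some not necessarily unique $g$), each fibre is a Heyting algebra and each reindexing a Heyting homomorphism, and each $P_{pr_1}$ for a projection $pr_1:A\times B\to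 A$ has left and right adjoints $\exists,\forall$ satisfying the Beck–Chevalley condition with respect to reindexing along $f\times\mathrm{id}_B$. A relation $R\in P(A\times B)$ is entire if $a:A\mid\top\vdash\exists b.R(a,b)$. The Rule of Choice holds if for every entire $R$ there is an arrow $f:A\to B$ with $a:A\mid\top\vdash R(a,f(a))$. The Axiom of Choice holds on $A$ if for every $B$ and every $R\in P(A\times B)$: $\forall a:A.\exists b:B.R(a,b)\vdash\exists f:W.\forall a:A.R(a,ev(f,a))$ with $ev:W\times A\to B$ a weak evaluation. A parameterized natural number object $(\mathbf N,0,s)$ satisfies induction in $P$ if for all $A$ and $\phi\in P(A\times\mathbf N)$, whenever $a:A\vdash\phi(a,0)$ and $a:A,m:\mathbf N\mid\phi(a,m)\vdash\phi(a,s(m))$, then $a:A,n:\mathbf N\vdash\phi(a,n)$. A weak hyperdoctrine is arithmetic if its base has a parameterized natural number object satisfying induction in it. *)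

(* Defs.v *)
From Stdlib Require Import Arith Cantor.

Set Implicit Arguments.

Definition cpair (x y : nat) : nat := Cantor.to_nat (x, y).

Inductive code : Type :=
| cZero | cSucc | cId | cFst | cSnd
| cPair (f g : code)
| cComp (f g : code)
| cRec (f g : code)       (* <x,0> |-> f x ; <x,n+1> |-> g <x,<n, R<x,n>>> *)
| cMu (f : code).         (* x |-> least n with f<x,n> = 0 (all earlier defined) *)

Inductive eval : code -> nat -> nat -> Prop :=
| ev_zero x : eval cZero x 0
| ev_succ x : eval cSucc x (S x)
| ev_id x : eval cId x x
| ev_fst x : eval cFst x (fst (Cantor.of_nat x))
| ev_snd x : eval cSnd x (snd (Cantor.of_nat x))
| ev_pair f g x a b : eval f x a -> eval g x b -> eval (cPair f g) x (cpair a b)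
| ev_comp f g x y z : eval g x y -> eval f y z -> eval (cComp f g) x z
| ev_rec0 f g z x r : Cantor.of_nat z = (x, 0) -> eval f x r -> eval (cRec f g) z r
| ev_recS f g z x n r r' : Cantor.of_nat z = (x, S n) ->
    eval (cRec f g) (cpair x n) r -> eval g (cpair x (cpair n r)) r' ->
    eval (cRec f g) z r'
| ev_mu f x n : eval f (cpair x n) 0 ->
    (forall m, m < n -> exists k, eval f (cpair x m) (S k)) ->
    eval (cMu f) x n.

Fixpoint code_nat (c : code) : nat :=
  match c with
  | cZero => cpair 0 0
  | cSucc => cpair 1 0
  | cId => cpair 2 0
  | cFst => cpair 3 0
  | cSnd => cpair 4 0
  | cPair f g => cpair 5 (cpair (code_nat f) (code_nat g))
  | cComp f g => cpair 6 (cpair (code_nat f) (code_nat g))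
  | cRec f g => cpair 7 (cpair (code_nat f) (code_nat g))
  | cMu f => cpair 8 (code_nat f)
  end.

(* phi t x y  <->  phi_t(x) is defined and equals y
   (phi_t is everywhere undefined if t is not the number of a code) *)
Definition phi (t x y : nat) : Prop := exists c, code_nat c = t /\ eval c x y.

Record pasm : Type := Pasm { carrier :> Type; realizer : carrier -> nat }.

Definition tracked (X Y : pasm) (f : X -> Y) : Prop :=
  exists t, forall x, phi t (realizer X x) (realizer Y (f x)).
Arguments tracked {X Y} f.

Definition pone : pasm := Pasm (fun _ : unit => 0).
Definition pprod (X Y : pasm) : pasm :=
  Pasm (fun p : X * Y => cpair (realizer X (fst p)) (realizer Y (snd p))).

Definition pN : pasm := Pasm (fun n : nat => n).

(* An element of Psi(A) is represented by an object of the slice       *)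
(* PAsm/A; the poset reflection is handled by working with the         *)
(* preorder vle (and its induced equivalence veq).                     *)

Record var (A : pasm) : Type :=
  Var { vdom : pasm; vmap : vdom -> A; vtr : tracked vmap }.
Arguments Var {A} vdom vmap vtr.

Definition vle {A : pasm} (a b : var A) : Prop :=
  exists k : vdom a -> vdom b, tracked k /\ forall y, vmap b (k y) = vmap a y.

Definition veq {A : pasm} (a b : var A) : Prop := vle a b /\ vle b a.

Definition pb_obj {A B : pasm} (f : B -> A) (a : var A) : pasm :=
  Pasm (fun p : {q : B * vdom a | f (fst q) = vmap a (snd q)} =>
          cpair (realizer B (fst (proj1_sig p))) (realizer (vdom a) (snd (proj1_sig p)))).

Lemma pb_proj_tracked {A B : pasm} (f : B -> A) (a : var A) :
  tracked (fun p : pb_obj f a => fst (proj1_sig p)).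
Proof.
  exists (code_nat cFst); intros p; exists cFst; split; [reflexivity|].
  simpl. unfold cpair. pose proof (ev_fst (Cantor.to_nat
     (realizer B (fst (proj1_sig p)), realizer (vdom a) (snd (proj1_sig p))))) as H.
  rewrite Cantor.cancel_of_to in H. exact H.
Qed.

Definition reindex {A B : pasm} (f : B -> A) (a : var A) : var B :=
  Var (pb_obj f a) (fun p => fst (proj1_sig p)) (pb_proj_tracked f a).

Definition is_top {A : pasm} (t : var A) : Prop := forall x : var A, vle x t.
Definition is_bot {A : pasm} (b : var A) : Prop := forall x : var A, vle b x.
Definition is_meet {A : pasm} (a b m : var A) : Prop :=
  forall x, vle x m <-> (vle x a /\ vle x b).
Definition is_join {A : pasm} (a b j : var A) : Prop :=
  forall x, vle j x <-> (vle a x /\ vle b x).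
Definition is_imp {A : pasm} (a b i : var A) : Prop :=
  forall x m, is_meet x a m -> (vle x i <-> vle m b).

Definition valid {A : pasm} (x : var A) : Prop := forall y : var A, vle y x.

(* e is (a representative of) the existential quantification of
   alpha in Psi(A x B) along pr1 : A x B -> A, i.e. the value at alpha of
   the left adjoint to Psi(pr1); similarly for the universal one. *)
Definition is_exists_of {A B : pasm} (alpha : var (pprod A B)) (e : var A) : Prop :=
  forall beta : var A, vle e beta <-> vle alpha (reindex (fun p : pprod A B => fst p) beta).
Definition is_forall_of {A B : pasm} (alpha : var (pprod A B)) (u : var A) : Prop :=
  forall beta : var A, vle beta u <-> vle (reindex (fun p : pprod A B => fst p) beta) alpha.

Definition weak_eval {A B W : pasm} (ev : pprod W A -> B) : Prop :=
  tracked ev /\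
  forall (C : pasm) (g : pprod C A -> B), tracked g ->
    exists h : C -> W, tracked h /\ forall c a, ev (h c, a) = g (c, a).

(* Main.v *)
Require Import Defs.
From Stdlib Require Import Arith Cantor Lia.

Definition p1 (n : nat) : nat := fst (Cantor.of_nat n).
Definition p2 (n : nat) : nat := snd (Cantor.of_nat n).
Lemma p1_cp a b : p1 (cpair a b) = a.
Proof. unfold p1, cpair. rewrite Cantor.cancel_of_to. reflexivity. Qed.
Lemma p2_cp a b : p2 (cpair a b) = b.
Proof. unfold p2, cpair. rewrite Cantor.cancel_of_to. reflexivity. Qed.
Lemma cp_inj a b c d : cpair a b = cpair c d -> a = c /\ b = d.
Proof. intro H. pose proof (f_equal p1 H). pose proof (f_equal p2 H).
  rewrite !p1_cp in *. rewrite !p2_cp in *. auto. Qed.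
Lemma ofnat_cp a b : Cantor.of_nat (cpair a b) = (a, b).
Proof. unfold cpair. apply Cantor.cancel_of_to. Qed.

Section EvInd.
Variable P : code -> nat -> nat -> Prop.
Hypothesis Hzero : forall x, P cZero x 0.
Hypothesis Hsucc : forall x, P cSucc x (S x).
Hypothesis Hid : forall x, P cId x x.
Hypothesis Hfst : forall x, P cFst x (fst (Cantor.of_nat x)).
Hypothesis Hsnd : forall x, P cSnd x (snd (Cantor.of_nat x)).
Hypothesis Hpair : forall f g x a b, P f x a -> P g x b -> P (cPair f g) x (cpair a b).
Hypothesis Hcomp : forall f g x y z, P g x y -> P f y z -> P (cComp f g) x z.
Hypothesis Hrec0 : forall f g z x r, Cantor.of_nat z = (x, 0) -> P f x r -> P (cRec f g) z r.
Hypothesis HrecS : forall f g z x n r r', Cantor.of_nat z = (x, S n) ->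
    P (cRec f g) (cpair x n) r -> P g (cpair x (cpair n r)) r' -> P (cRec f g) z r'.
Hypothesis Hmu : forall f x n, P f (cpair x n) 0 ->
    (forall m, m < n -> exists k, P f (cpair x m) (S k)) -> P (cMu f) x n.

Fixpoint eval_ind' c x y (H : eval c x y) {struct H} : P c x y.
Proof.
  destruct H.
  - apply Hzero.
  - apply Hsucc.
  - apply Hid.
  - apply Hfst.
  - apply Hsnd.
  - apply Hpair; apply eval_ind'; assumption.
  - eapply Hcomp; apply eval_ind'; eassumption.
  - eapply Hrec0; [eassumption|apply eval_ind'; assumption].
  - eapply HrecS; [eassumption|apply eval_ind'; eassumption|apply eval_ind'; eassumption].
  - apply Hmu; [apply eval_ind'; assumption|].
    intros m Hm. destruct (H0 m Hm) as [k Hk]. exists k. apply eval_ind'. exact Hk.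
Defined.
End EvInd.
Inductive ex : Type :=
| X | Cst (n : nat) | Fst (e : ex) | Snd (e : ex) | Pr (e1 e2 : ex)
| Ifz (e0 e1 e2 : ex) | Pred (e : ex) | Succ (e : ex) | Comp (e1 e2 : ex).

Definition ifz (n a b : nat) : nat := match n with 0 => a | S _ => b end.

Fixpoint den (e : ex) (x : nat) : nat :=
  match e with
  | X => x
  | Cst n => n
  | Fst e => p1 (den e x)
  | Snd e => p2 (den e x)
  | Pr e1 e2 => cpair (den e1 x) (den e2 x)
  | Ifz e0 e1 e2 => ifz (den e0 x) (den e1 x) (den e2 x)
  | Pred e => Nat.pred (den e x)
  | Succ e => S (den e x)
  | Comp e1 e2 => den e1 (den e2 x)
  end.

Fixpoint cconst (n : nat) : code :=
  match n with 0 => cZero | S n => cComp cSucc (cconst n) end.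

Lemma eval_const n x : eval (cconst n) x n.
Proof. induction n; simpl. constructor. econstructor; [eassumption|constructor]. Qed.

Definition cIFZ : code := cRec cFst (cComp cSnd cFst).
Definition cPRED : code := cComp (cRec cZero (cComp cFst cSnd)) (cPair cZero cId).

Lemma eval_fst' x : eval cFst x (p1 x).
Proof. constructor. Qed.
Lemma eval_snd' x : eval cSnd x (p2 x).
Proof. constructor. Qed.

Lemma eval_ifz a b n : eval cIFZ (cpair (cpair a b) n) (ifz n a b).
Proof.
  induction n.
  - eapply ev_rec0. apply ofnat_cp. simpl. pose proof (eval_fst' (cpair a b)). rewrite p1_cp in H. exact H.
  - eapply ev_recS. apply ofnat_cp. exact IHn.
    simpl. econstructor. apply eval_fst'. rewrite p1_cp. pose proof (eval_snd' (cpair a b)).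
    rewrite p2_cp in H. exact H.
Qed.

Lemma eval_pred n : eval cPRED n (Nat.pred n).
Proof.
  econstructor. econstructor. constructor. constructor.
  assert (forall m, eval (cRec cZero (cComp cFst cSnd)) (cpair 0 m) (Nat.pred m)).
  { induction m.
    - eapply ev_rec0. apply ofnat_cp. constructor.
    - eapply ev_recS. apply ofnat_cp. exact IHm.
      econstructor. apply eval_snd'. rewrite p2_cp. pose proof (eval_fst' (cpair m (Nat.pred m))). rewrite p1_cp in H. exact H. }
  apply H.
Qed.

Fixpoint comp (e : ex) : code :=
  match e with
  | X => cId
  | Cst n => cconst n
  | Fst e => cComp cFst (comp e)
  | Snd e => cComp cSnd (comp e)
  | Pr e1 e2 => cPair (comp e1) (comp e2)
  | Ifz e0 e1 e2 => cComp cIFZ (cPair (cPair (comp e1) (comp e2)) (comp e0))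
  | Pred e => cComp cPRED (comp e)
  | Succ e => cComp cSucc (comp e)
  | Comp e1 e2 => cComp (comp e1) (comp e2)
  end.

Lemma eval_comp e x : eval (comp e) x (den e x).
Proof.
  revert x; induction e; intro x; simpl.
  - constructor.
  - apply eval_const.
  - econstructor; [apply IHe|apply eval_fst'].
  - econstructor; [apply IHe|apply eval_snd'].
  - constructor; auto.
  - econstructor; [constructor; [constructor; auto|auto]|apply eval_ifz].
  - econstructor; [apply IHe|apply eval_pred].
  - econstructor; [apply IHe|constructor].
  - econstructor; [apply IHe2|apply IHe1].
Qed.
Definition EV (c x s : nat) : nat := cpair 0 (cpair c (cpair x s)).
Definition RET (v s : nat) : nat := cpair 1 (cpair v s).
Definition push (fr s : nat) : nat := S (cpair fr s).

Definition eEV (c x s : ex) : ex := Pr (Cst 0) (Pr c (Pr x s)).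
Definition eRET (v s : ex) : ex := Pr (Cst 1) (Pr v s).
Definition epush (fr s : ex) : ex := Succ (Pr fr s).

Fixpoint sw (t : ex) (l : list ex) (d : ex) : ex :=
  match l with nil => d | cons e l => Ifz t e (sw (Pred t) l d) end.

(* Eval-mode step; X = cpair c (cpair x s) *)
Definition sc := Fst X.
Definition sx := Fst (Snd X).
Definition ss := Snd (Snd X).
Definition sp := Snd sc.
Definition evstep : ex :=
  sw (Fst sc) (
    eRET (Cst 0) ss ::
    eRET (Succ sx) ss ::
    eRET sx ss ::
    eRET (Fst sx) ss ::
    eRET (Snd sx) ss ::
    eEV (Fst sp) sx (epush (Pr (Cst 0) (Pr (Snd sp) sx)) ss) ::
    eEV (Snd sp) sx (epush (Pr (Cst 2) (Fst sp)) ss) ::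
    Ifz (Snd sx) (eEV (Fst sp) (Fst sx) ss)
        (eEV sc (Pr (Fst sx) (Pred (Snd sx)))
             (epush (Pr (Cst 3) (Pr (Snd sp) (Pr (Fst sx) (Pred (Snd sx))))) ss)) ::
    eEV sp (Pr sx (Cst 0)) (epush (Pr (Cst 4) (Pr sp (Pr sx (Cst 0)))) ss) ::
    nil) (eEV sc sx ss).

(* Ret-mode step; X = cpair v s *)
Definition rv := Fst X.
Definition rs := Snd X.
Definition rs' := Snd (Pred rs).
Definition rfr := Fst (Pred rs).
Definition rfp := Snd rfr.
Definition retstep : ex :=
  Ifz rs (eRET rv rs)
   (sw (Fst rfr) (
     eEV (Fst rfp) (Snd rfp) (epush (Pr (Cst 1) rv) rs') ::
     eRET (Pr rfp rv) rs' ::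
     eEV rfp rv rs' ::
     eEV (Fst rfp) (Pr (Fst (Snd rfp)) (Pr (Snd (Snd rfp)) rv)) rs' ::
     Ifz rv (eRET (Snd (Snd rfp)) rs')
        (eEV (Fst rfp) (Pr (Fst (Snd rfp)) (Succ (Snd (Snd rfp))))
            (epush (Pr (Cst 4) (Pr (Fst rfp) (Pr (Fst (Snd rfp)) (Succ (Snd (Snd rfp)))))) rs')) ::
     nil) (eRET rv rs)).

Definition estep : ex := Ifz (Fst X) (Comp evstep (Snd X)) (Comp retstep (Snd X)).
Definition step (n : nat) : nat := den estep n.

Definition steps (a b : nat) : Prop := exists n, Nat.iter n step a = b.

Lemma steps_refl a : steps a a.
Proof. exists 0. reflexivity. Qed.
Lemma iter_add n m a : Nat.iter (n + m) step a = Nat.iter n step (Nat.iter m step a).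
Proof. induction n; simpl; congruence. Qed.
Lemma steps_trans a b c : steps a b -> steps b c -> steps a c.
Proof. intros [n Hn] [m Hm]. exists (m + n). rewrite iter_add. congruence. Qed.
Lemma steps_step a b : step a = b -> steps a b.
Proof. intro H. exists 1. exact H. Qed.
Lemma steps_step' a b c : step a = b -> steps b c -> steps a c.
Proof. intros H1 H2. eapply steps_trans; [apply steps_step; exact H1|exact H2]. Qed.

Ltac dsimp := cbn [den sw estep evstep retstep sc sx ss sp rv rs rs' rfr rfp eEV eRET epush] ;
  repeat (rewrite ?p1_cp, ?p2_cp; cbn [ifz Nat.pred]).

Lemma step_ev c x s : step (EV c x s) = den evstep (cpair c (cpair x s)).
Proof. unfold step, EV. dsimp. reflexivity. Qed.
Lemma step_ret v s : step (RET v s) = den retstep (cpair v s).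
Proof. unfold step, RET. dsimp. reflexivity. Qed.

Lemma sim : forall c x y, eval c x y -> forall s, steps (EV (code_nat c) x s) (RET y s).
Proof.
  apply (eval_ind' (fun c x y => forall s, steps (EV (code_nat c) x s) (RET y s))).
  - intros x s. apply steps_step. rewrite step_ev. simpl code_nat. dsimp. reflexivity.
  - intros x s. apply steps_step. rewrite step_ev. simpl code_nat. dsimp. reflexivity.
  - intros x s. apply steps_step. rewrite step_ev. simpl code_nat. dsimp. reflexivity.
  - intros x s. apply steps_step. rewrite step_ev. simpl code_nat. dsimp. reflexivity.
  - intros x s. apply steps_step. rewrite step_ev. simpl code_nat. dsimp. reflexivity.
  - intros f g x a b Hf Hg s. eapply steps_step'. rewrite step_ev. simpl code_nat. dsimp. reflexivity.
    eapply steps_trans. apply Hf.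
    eapply steps_step'. rewrite step_ret. dsimp. reflexivity.
    eapply steps_trans. apply Hg.
    eapply steps_step'. rewrite step_ret. dsimp. reflexivity. apply steps_refl.
  - intros f g x y z Hg Hf s. eapply steps_step'. rewrite step_ev. simpl code_nat. dsimp. reflexivity.
    eapply steps_trans. apply Hg.
    eapply steps_step'. rewrite step_ret. dsimp. reflexivity. apply Hf.
  - intros f g z x r Hz Hf s.
    assert (Ez : z = cpair x 0) by (rewrite <- (Cantor.cancel_to_of z), Hz; reflexivity). subst z.
    eapply steps_step'. rewrite step_ev. simpl code_nat. dsimp. reflexivity. apply Hf.
  - intros f g z x n r r' Hz Hr Hg s.
    assert (Ez : z = cpair x (S n)) by (rewrite <- (Cantor.cancel_to_of z), Hz; reflexivity). subst z.
    eapply steps_step'. rewrite step_ev. simpl code_nat. dsimp. reflexivity.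
    eapply steps_trans. simpl code_nat in Hr. apply Hr.
    eapply steps_step'. rewrite step_ret. dsimp. reflexivity. apply Hg.
  - intros f x n H0 Hlt s.
    assert (L : forall d, d <= n -> steps (EV (code_nat f) (cpair x (n - d)) (push (cpair 4 (cpair (code_nat f) (cpair x (n - d)))) s)) (RET n s)).
    { induction d; intro Hd.
      - rewrite Nat.sub_0_r. eapply steps_trans. apply H0.
        eapply steps_step'. unfold push. rewrite step_ret. dsimp. reflexivity. apply steps_refl.
      - destruct (Hlt (n - S d)) as [k Hk]. lia.
        eapply steps_trans. apply Hk.
        eapply steps_step'. unfold push. rewrite step_ret. dsimp. reflexivity.
        replace (S (n - S d)) with (n - d) by lia. apply IHd. lia. }
    eapply steps_step'. rewrite step_ev. simpl code_nat. dsimp. reflexivity.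
    pose proof (L n (le_n n)). rewrite Nat.sub_diag in H. exact H.
Qed.
From Stdlib Require Import Classical ClassicalEpsilon.
Lemma cp_eta n : cpair (p1 n) (p2 n) = n.
Proof. unfold cpair, p1, p2. rewrite <- surjective_pairing. apply Cantor.cancel_to_of. Qed.

Definition einit : ex := eEV (Fst X) (Snd X) (Cst 0).
Definition cRUN : code := cRec (comp einit) (cComp (comp estep) (cComp cSnd cSnd)).
Lemma eval_RUN x n : eval cRUN (cpair x n) (Nat.iter n step (den einit x)).
Proof.
  induction n.
  - eapply ev_rec0. apply ofnat_cp. apply eval_comp.
  - eapply ev_recS. apply ofnat_cp. exact IHn.
    econstructor. econstructor. apply eval_snd'. rewrite p2_cp. apply eval_snd'.
    rewrite p2_cp. apply eval_comp.
Qed.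

Definition etest : ex :=
  Ifz (Pred (Fst X)) (Ifz (Fst X) (Cst 1) (Ifz (Snd (Snd X)) (Cst 0) (Cst 1))) (Cst 1).
Definition cMU : code := cMu (cComp (comp etest) cRUN).
Definition cU : code := cComp (comp (Fst (Snd X))) (cComp cRUN (cPair cId cMU)).

Lemma test_spec n : den etest n = 0 -> n = RET (p1 (p2 n)) 0.
Proof.
  simpl. destruct (p1 n) as [|[|k]] eqn:E; simpl; try discriminate.
  destruct (p2 (p2 n)) eqn:E2; simpl; try discriminate. intros _.
  unfold RET. rewrite <- E, <- E2, cp_eta, cp_eta. reflexivity.
Qed.

Lemma test_ret v : den etest (RET v 0) = 0.
Proof. unfold RET. simpl. rewrite !p1_cp, !p2_cp. reflexivity. Qed.

Lemma step_halt v : step (RET v 0) = RET v 0.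
Proof. rewrite step_ret. dsimp. reflexivity. Qed.
Lemma iter_halt k v : Nat.iter k step (RET v 0) = RET v 0.
Proof. induction k; simpl; [reflexivity|rewrite IHk; apply step_halt]. Qed.

Lemma least (P : nat -> Prop) n : P n -> exists N, P N /\ forall m, m < N -> ~ P m.
Proof.
  induction n as [n IH] using (well_founded_induction Nat.lt_wf_0). intro Hn.
  destruct (classic (exists m, m < n /\ P m)) as [[m [Hm Pm]]|H].
  - exact (IH m Hm Pm).
  - exists n. split; [exact Hn|]. intros m Hm Pm. apply H. eauto.
Qed.

Lemma universal c x y : eval c x y -> eval cU (cpair (code_nat c) x) y.
Proof.
  intro H. destruct (sim c x y H 0) as [n0 Hn0].
  set (I := den einit (cpair (code_nat c) x)).
  assert (HI : I = EV (code_nat c) x 0).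
  { unfold I, einit, EV. dsimp. reflexivity. }
  destruct (least (fun n => den etest (Nat.iter n step I) = 0) n0) as [N [HN Hmin]].
  { rewrite HI, Hn0. apply test_ret. }
  apply test_spec in HN.
  assert (NN : N <= n0).
  { destruct (Nat.le_gt_cases N n0) as [|Hlt]; [assumption|].
    exfalso. apply (Hmin n0 Hlt). rewrite HI, Hn0. apply test_ret. }
  assert (Ey : Nat.iter N step I = RET y 0).
  { rewrite <- Hn0, <- HI. replace n0 with ((n0 - N) + N) by lia. rewrite iter_add, HN, iter_halt.
    rewrite <- HN. reflexivity. }
  unfold cU. econstructor.
  - econstructor. constructor. constructor.
    + constructor.
      * econstructor. apply eval_RUN. fold I. rewrite Ey. pose proof (eval_comp etest (RET y 0)) as E; rewrite test_ret in E; exact E.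
      * intros m Hm. destruct (den etest (Nat.iter m step I)) as [|k] eqn:Ek.
        { exfalso. exact (Hmin m Hm Ek). }
        exists k. econstructor. apply eval_RUN. fold I. rewrite <- Ek. apply eval_comp.
    + apply eval_RUN.
  - fold I. rewrite Ey. unfold RET. pose proof (eval_comp (Fst (Snd X)) (cpair 1 (cpair y 0))).
    simpl in H0. rewrite p2_cp, p1_cp in H0. exact H0.
Qed.
Definition cU2 : code := cComp cU (comp (Pr (Fst (Fst X)) (Pr (Snd (Fst X)) (Snd X)))).
Definition app (n x y : nat) : Prop := eval cU2 (cpair n x) y.

Lemma app_intro c r x y : eval c (cpair r x) y -> app (cpair (code_nat c) r) x y.
Proof.
  intro H. unfold app, cU2. econstructor. apply eval_comp. simpl. rewrite ?p1_cp, ?p2_cp, ?p1_cp.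
  apply universal. exact H.
Qed.

Lemma eval_p1 a b : eval cFst (cpair a b) a.
Proof. pose proof (eval_fst' (cpair a b)). rewrite p1_cp in H. exact H. Qed.
Lemma eval_p2 a b : eval cSnd (cpair a b) b.
Proof. pose proof (eval_snd' (cpair a b)). rewrite p2_cp in H. exact H. Qed.

Definition Tr (c : code) {X Y : pasm} (f : X -> Y) : Prop :=
  forall x, eval c (realizer X x) (realizer Y (f x)).

Lemma trk_intro {X Y : pasm} (f : X -> Y) c : Tr c f -> tracked f.
Proof. intro H. exists (code_nat c). intro x. exists c. split; [reflexivity|apply H]. Qed.

Lemma code_nat_inj c d : code_nat c = code_nat d -> c = d.
Proof.
  revert d; induction c; intros d H; destruct d; simpl in H;
  repeat match goal with H : cpair _ _ = cpair _ _ |- _ => apply cp_inj in H; destruct H end;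
  try discriminate; try congruence;
  try (f_equal; auto).
Qed.

Lemma trk_elim {X Y : pasm} {f : X -> Y} : tracked f -> exists c, Tr c f.
Proof.
  intros [t Ht].
  destruct (classic (exists x : X, True)) as [[x0 _]|Hn].
  - destruct (Ht x0) as [c [Hc _]]. exists c. intro x. destruct (Ht x) as [c' [Hc' E]].
    assert (c = c') by (apply code_nat_inj; congruence). subst. exact E.
  - exists cId. intro x. exfalso. apply Hn. exists x. exact I.
Qed.

Lemma trk_comp {X Y Z : pasm} (f : X -> Y) (g : Y -> Z) :
  tracked f -> tracked g -> tracked (fun x => g (f x)).
Proof.
  intros Hf Hg. destruct (trk_elim Hf) as [cf Hcf]. destruct (trk_elim Hg) as [cg Hcg].
  apply trk_intro with (cComp cg cf). intro x. econstructor; [apply Hcf|apply Hcg].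
Qed.

Lemma trk_id (X : pasm) : tracked (fun x : X => x).
Proof. apply trk_intro with cId. intro x. constructor. Qed.

Lemma trk_fst (X Y : pasm) : tracked (fun p : pprod X Y => fst p).
Proof. apply trk_intro with cFst. intros [x y]. apply eval_p1. Qed.
Lemma trk_snd (X Y : pasm) : tracked (fun p : pprod X Y => snd p).
Proof. apply trk_intro with cSnd. intros [x y]. apply eval_p2. Qed.
Lemma trk_pair (Z X Y : pasm) (f : Z -> X) (g : Z -> Y) : tracked f -> tracked g ->
  tracked (fun z : Z => ((f z, g z) : carrier (pprod X Y))).
Proof.
  intros Hf Hg. destruct (trk_elim Hf) as [cf Hcf]. destruct (trk_elim Hg) as [cg Hcg].
  apply trk_intro with (cPair cf cg). intro z. simpl. constructor; auto.
Qed.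
Lemma trk_unit (X : pasm) : tracked (fun _ : X => (tt : carrier pone)).
Proof. apply trk_intro with cZero. intro x. constructor. Qed.

Lemma vtr_code {A : pasm} (a : var A) : exists c, Tr c (vmap a).
Proof. apply trk_elim. apply vtr. Qed.

Definition Wobj (A B : pasm) : pasm :=
  Pasm (fun w : {f : A -> B & {n : nat | forall a, app n (realizer A a) (realizer B (f a))}} =>
          proj1_sig (projT2 w)).
Definition wev (A B : pasm) (p : pprod (Wobj A B) A) : B := projT1 (fst p) (snd p).

Lemma wev_ok (A B : pasm) : @weak_eval A B (Wobj A B) (wev A B).
Proof.
  split.
  - apply trk_intro with cU2. intros [[f [n Hn]] a]. simpl. apply Hn.
  - intros C g Hg. destruct (trk_elim Hg) as [cg Hcg].
    unshelve eexists (fun c => existT _ (fun a => g (c, a)) (exist _ (cpair (code_nat cg) (realizer C c)) _)).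
    + intro a. apply app_intro. apply (Hcg (c, a)).
    + split; [|reflexivity].
      apply trk_intro with (cPair (cconst (code_nat cg)) cId). intro c. simpl.
      constructor; [apply eval_const|constructor].
Qed.

Lemma vle_refl {A : pasm} (a : var A) : vle a a.
Proof. exists (fun y => y). split; [apply trk_id|reflexivity]. Qed.

Lemma vle_trans {A : pasm} (a b c : var A) : vle a b -> vle b c -> vle a c.
Proof.
  intros [k [Hk Ek]] [l [Hl El]]. exists (fun y => l (k y)). split.
  - apply trk_comp; assumption.
  - intro y. rewrite El. apply Ek.
Qed.

Lemma yoneda_r {A : pasm} (a b : var A) : (forall x, vle x a <-> vle x b) -> veq a b.
Proof. intro H. split; [apply H, vle_refl|apply H, vle_refl]. Qed.
Lemma yoneda_l {A : pasm} (a b : var A) : (forall x, vle a x <-> vle b x) -> veq a b.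
Proof. intro H. split; [apply H, vle_refl|apply H, vle_refl]. Qed.

Definition vsig {A B : pasm} (f : B -> A) (Hf : tracked f) (x : var B) : var A :=
  Var (vdom x) (fun w => f (vmap x w)) (trk_comp _ _ (vtr x) Hf).

Lemma adj_gen {A B : pasm} (f : B -> A) (x : var B) (a : var A) :
  (exists k : vdom x -> vdom a, tracked k /\ forall y, vmap a (k y) = f (vmap x y))
  <-> vle x (reindex f a).
Proof.
  split.
  - intros [k [Hk Ek]].
    unshelve eexists (fun y => exist _ (vmap x y, k y) _).
    + simpl. symmetry. apply Ek.
    + split; [|reflexivity].
      destruct (trk_elim Hk) as [ck Hck]. destruct (vtr_code x) as [cx Hcx].
      apply trk_intro with (cPair cx ck). intro y. simpl. constructor; auto.
  - intros [k [Hk Ek]]. exists (fun y => snd (proj1_sig (k y))). split.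
    + destruct (trk_elim Hk) as [ck Hck].
      apply trk_intro with (cComp cSnd ck). intro y. econstructor. apply Hck. simpl. apply eval_p2.
    + intro y. rewrite <- (proj2_sig (k y)). f_equal. apply (Ek y).
Qed.

Lemma adj {A B : pasm} (f : B -> A) (Hf : tracked f) (x : var B) (a : var A) :
  vle (vsig f Hf x) a <-> vle x (reindex f a).
Proof.
  rewrite <- adj_gen. split; intros [k [Hk Ek]]; exists k; split; auto.
Qed.

Lemma reindex_mono {A B : pasm} (f : B -> A) (Hf : tracked f) (a b : var A) :
  vle a b -> vle (reindex f a) (reindex f b).
Proof.
  intro H. apply adj with (Hf := Hf). eapply vle_trans; [|exact H].
  apply (proj2 (adj f Hf _ _)). apply vle_refl.
Qed.
Lemma vle_intro {A : pasm} (a b : var A) c :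
  (forall y : vdom a, exists z : vdom b, vmap b z = vmap a y /\ eval c (realizer _ y) (realizer _ z)) ->
  vle a b.
Proof.
  intro H. exists (fun y => proj1_sig (constructive_indefinite_description _ (H y))). split.
  - apply trk_intro with c. intro y. exact (proj2 (proj2_sig (constructive_indefinite_description _ (H y)))).
  - intro y. exact (proj1 (proj2_sig (constructive_indefinite_description _ (H y)))).
Qed.

Lemma vle_elim {A : pasm} (a b : var A) : vle a b ->
  exists c, forall y : vdom a, exists z : vdom b, vmap b z = vmap a y /\ eval c (realizer _ y) (realizer _ z).
Proof.
  intros [k [Hk Ek]]. destruct (trk_elim Hk) as [c Hc]. exists c. intro y. exists (k y). auto.
Qed.

Lemma adj_ex {A B : pasm} (f : B -> A) (x : var B) (a : var A) :
  vle x (reindex f a) <->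
  exists c, forall y : vdom x, exists z : vdom a, vmap a z = f (vmap x y) /\ eval c (realizer _ y) (realizer _ z).
Proof.
  rewrite <- adj_gen. split.
  - intros [k [Hk Ek]]. destruct (trk_elim Hk) as [c Hc]. exists c. intro y. exists (k y). auto.
  - intros [c H]. exists (fun y => proj1_sig (constructive_indefinite_description _ (H y))). split.
    + apply trk_intro with c. intro y. exact (proj2 (proj2_sig (constructive_indefinite_description _ (H y)))).
    + intro y. exact (proj1 (proj2_sig (constructive_indefinite_description _ (H y)))).
Qed.

Lemma vsig_mono {A B : pasm} (f : B -> A) (Hf : tracked f) (x y : var B) :
  vle x y -> vle (vsig f Hf x) (vsig f Hf y).
Proof. intros [k [Hk Ek]]. exists k. split; auto. intro w. simpl. rewrite Ek. reflexivity. Qed.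

Definition cCase (c0 c1 : code) : code :=
  cComp cU2 (cPair (comp (Ifz (Fst X) (Cst (cpair (code_nat (cComp c0 cSnd)) 0))
                                      (Cst (cpair (code_nat (cComp c1 cSnd)) 0)))) cSnd).
Lemma case0 c0 c1 r y : eval c0 r y -> eval (cCase c0 c1) (cpair 0 r) y.
Proof.
  intro H. unfold cCase. econstructor. constructor. apply eval_comp. apply eval_p2.
  cbn [den]. rewrite p1_cp. cbn [ifz]. apply app_intro. econstructor. apply eval_p2. exact H.
Qed.
Lemma case1 c0 c1 r y : eval c1 r y -> eval (cCase c0 c1) (cpair 1 r) y.
Proof.
  intro H. unfold cCase. econstructor. constructor. apply eval_comp. apply eval_p2.
  cbn [den]. rewrite p1_cp. cbn [ifz]. apply app_intro. econstructor. apply eval_p2. exact H.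
Qed.

Definition vtop (A : pasm) : var A := Var A (fun x => x) (trk_id A).

Definition emp : pasm := Pasm (fun e : Empty_set => 0).
Lemma emp_tr {A : pasm} : tracked (fun e : emp => match e with end : carrier A).
Proof. apply trk_intro with cId. intro e. destruct e. Qed.
Definition vbot (A : pasm) : var A := Var emp (fun e => match e with end) emp_tr.

Definition vmeet {A : pasm} (a b : var A) : var A :=
  Var (pb_obj (vmap a) b) (fun p => vmap a (fst (proj1_sig p)))
      (trk_comp _ _ (pb_proj_tracked _ _) (vtr a)).

Definition jobj {A : pasm} (a b : var A) : pasm :=
  Pasm (fun s : vdom a + vdom b =>
          match s with inl u => cpair 0 (realizer _ u) | inr v => cpair 1 (realizer _ v) end).
Definition jmap {A : pasm} (a b : var A) (s : jobj a b) : A :=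
  match s with inl u => vmap a u | inr v => vmap b v end.
Lemma jmap_tr {A : pasm} (a b : var A) : tracked (jmap a b).
Proof.
  destruct (vtr_code a) as [ca Ha]. destruct (vtr_code b) as [cb Hb].
  apply trk_intro with (cCase ca cb). intros [u|v]; simpl; [apply case0|apply case1]; auto.
Qed.
Definition vjoin {A : pasm} (a b : var A) : var A := Var (jobj a b) (jmap a b) (jmap_tr a b).

Definition iobj {A : pasm} (a b : var A) : pasm :=
  Pasm (fun p : {q : carrier A * nat | forall u : vdom a, vmap a u = fst q ->
                   exists v : vdom b, vmap b v = fst q /\ app (snd q) (realizer _ u) (realizer _ v)} =>
          cpair (realizer A (fst (proj1_sig p))) (snd (proj1_sig p))).
Lemma imap_tr {A : pasm} (a b : var A) : tracked (fun p : iobj a b => fst (proj1_sig p)).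
Proof. apply trk_intro with cFst. intro p. apply eval_p1. Qed.
Definition vimp {A : pasm} (a b : var A) : var A := Var (iobj a b) _ (imap_tr a b).

Lemma top_ok (A : pasm) : is_top (vtop A).
Proof. intro x. destruct (vtr_code x) as [c Hc]. apply vle_intro with c. intro y. exists (vmap x y). auto. Qed.

Lemma bot_ok (A : pasm) : is_bot (vbot A).
Proof. intro x. apply vle_intro with cId. intro e. destruct e. Qed.

Lemma meet_ok {A : pasm} (a b : var A) : is_meet a b (vmeet a b).
Proof.
  intro x. split.
  - intro H. split; eapply vle_trans; try exact H.
    + apply vle_intro with cFst. intros [[u v] e]. exists u. split; [reflexivity|apply eval_p1].
    + apply vle_intro with cSnd. intros [[u v] e]. exists v. split; [simpl in *; congruence|apply eval_p2].
  - intros [Ha Hb]. apply vle_elim in Ha as [ca Ha]. apply vle_elim in Hb as [cb Hb].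
    apply vle_intro with (cPair ca cb). intro y.
    destruct (Ha y) as [u [Eu Hu]]. destruct (Hb y) as [v [Ev Hv]].
    unshelve eexists (exist _ (u, v) _).
    + simpl. congruence.
    + simpl. split; [assumption|constructor; assumption].
Qed.

Lemma join_ok {A : pasm} (a b : var A) : is_join a b (vjoin a b).
Proof.
  intro x. split.
  - intro H. split; eapply vle_trans; try exact H.
    + apply vle_intro with (cPair cZero cId). intro u. exists (inl u). split; [reflexivity|].
      simpl. constructor; constructor.
    + apply vle_intro with (cPair (cconst 1) cId). intro v. exists (inr v). split; [reflexivity|].
      simpl. apply ev_pair; [econstructor; constructor|constructor].
  - intros [Ha Hb]. apply vle_elim in Ha as [ca Ha]. apply vle_elim in Hb as [cb Hb].
    apply vle_intro with (cCase ca cb). intros [u|v].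
    + destruct (Ha u) as [z [Ez Hz]]. exists z. split; [exact Ez|apply case0; exact Hz].
    + destruct (Hb v) as [z [Ez Hz]]. exists z. split; [exact Ez|apply case1; exact Hz].
Qed.

Lemma meet_unique {A : pasm} (a b m : var A) : is_meet a b m -> veq m (vmeet a b).
Proof.
  intro H. split.
  - apply meet_ok. apply H. apply vle_refl.
  - apply H. apply meet_ok. apply vle_refl.
Qed.

Lemma imp_ok {A : pasm} (a b : var A) : is_imp a b (vimp a b).
Proof.
  intros x m Hm. destruct (meet_unique _ _ _ Hm) as [mM Mm]. split.
  - intro H. eapply vle_trans; [exact mM|].
    apply vle_elim in H as [ck Hk].
    apply vle_intro with (cComp cU2 (cPair (cComp cSnd (cComp ck cFst)) cSnd)).
    intros [[y u] e]. simpl in e.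
    destruct (Hk y) as [[[a0 n] Hq] [Eq Hev]]. simpl in Eq, Hev.
    destruct (Hq u) as [v [Ev Hv]]. simpl. congruence.
    simpl in Ev, Hv. exists v. split; [simpl; congruence|].
    simpl. econstructor; [|exact Hv]. constructor.
    + econstructor. econstructor. apply eval_p1. exact Hev. apply eval_p2.
    + apply eval_p2.
  - intro H. assert (Mb : vle (vmeet x a) b) by (eapply vle_trans; eassumption).
    apply vle_elim in Mb as [c' Hc']. destruct (vtr_code x) as [cx Hcx].
    apply vle_intro with (cPair cx (cPair (cconst (code_nat c')) cId)). intro y.
    unshelve eexists (exist _ (vmap x y, cpair (code_nat c') (realizer _ y)) _).
    + simpl. intros u Eu.
      destruct (Hc' (exist _ (y, u) (eq_sym Eu))) as [v [Ev Hv]].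
      exists v. split; [exact Ev|]. apply app_intro. exact Hv.
    + simpl. split; [reflexivity|]. constructor; [apply Hcx|].
      constructor; [apply eval_const|constructor].
Qed.
Lemma reindex_id {A : pasm} (a : var A) : veq (reindex (fun x : A => x) a) a.
Proof.
  apply yoneda_r. intro x. rewrite <- (adj _ (trk_id A)).
  split; intros [k [Hk Ek]]; exists k; split; assumption.
Qed.

Lemma reindex_comp {A B C : pasm} (f : B -> A) (g : C -> B) (Hf : tracked f) (Hg : tracked g) (a : var A) :
  veq (reindex (fun c : C => f (g c)) a) (reindex g (reindex f a)).
Proof.
  apply yoneda_r. intro x. rewrite <- (adj _ (trk_comp _ _ Hg Hf)), <- (adj g Hg), <- (adj f Hf).
  split; intros [k [Hk Ek]]; exists k; split; assumption.
Qed.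

Lemma vle_veq_l {A : pasm} (a a' b : var A) : veq a a' -> vle a b -> vle a' b.
Proof. intros [_ H] H2. eapply vle_trans; eassumption. Qed.
Lemma vle_veq_r {A : pasm} (a b b' : var A) : veq b b' -> vle a b -> vle a b'.
Proof. intros [H _] H2. eapply vle_trans; eassumption. Qed.

Lemma frobenius {A B : pasm} (f : B -> A) (Hf : tracked f) (x m : var B) (a : var A) :
  is_meet x (reindex f a) m -> is_meet (vsig f Hf x) a (vsig f Hf m).
Proof.
  intros Hm z. split.
  - intro H. split.
    + eapply vle_trans; [exact H|]. apply vsig_mono. apply Hm. apply vle_refl.
    + eapply vle_trans; [exact H|]. apply adj. apply Hm. apply vle_refl.
  - intros [[k [Hk Ek]] [k2 [Hk2 Ek2]]].
    set (z' := Var (vdom z) (fun w => vmap x (k w)) (trk_comp _ _ Hk (vtr x))).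
    assert (H1 : vle z' x) by (exists k; split; [assumption|reflexivity]).
    assert (H2 : vle z' (reindex f a)).
    { apply adj_gen. exists k2. split; [assumption|]. intro y. simpl. rewrite Ek2. symmetry. apply Ek. }
    destruct (proj2 (Hm z') (conj H1 H2)) as [k3 [Hk3 Ek3]].
    exists k3. split; [assumption|]. intro y. simpl. rewrite Ek3. apply Ek.
Qed.

Lemma reindex_heyting {A B : pasm} (f : B -> A) (Hf : tracked f) :
     (forall a b : var A, vle a b -> vle (reindex f a) (reindex f b)) /\
     (forall t : var A, is_top t -> is_top (reindex f t)) /\
     (forall b : var A, is_bot b -> is_bot (reindex f b)) /\
     (forall a b m : var A, is_meet a b m -> is_meet (reindex f a) (reindex f b) (reindex f m)) /\
     (forall a b j : var A, is_join a b j -> is_join (reindex f a) (reindex f b) (reindex f j)) /\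
     (forall a b i : var A, is_imp a b i -> is_imp (reindex f a) (reindex f b) (reindex f i)).
Proof.
  split; [|split; [|split; [|split; [|split]]]].
  - apply reindex_mono; assumption.
  - intros t Ht x. apply (adj f Hf). apply Ht.
  - intros b Hb x. destruct (Hb (vbot A)) as [k [Hk Ek]].
    apply vle_intro with cId. intro p. destruct (k (snd (proj1_sig p))).
  - intros a b m Hm x. rewrite <- !(adj f Hf). apply Hm.
  - intros a b j Hj x. split.
    + intro H. split; eapply vle_trans; try exact H; apply reindex_mono; try assumption;
        apply Hj; apply vle_refl.
    + intros [Ha Hb]. apply vle_elim in Ha as [ca Ha]. apply vle_elim in Hb as [cb Hb].
      destruct (proj2 (Hj (vjoin a b)) (proj1 (join_ok a b _) (vle_refl _))) as [kj [Hkj Ekj]].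
      destruct (trk_elim Hkj) as [cj Hcj].
      apply vle_intro with
        (cComp (cCase ca cb) (cComp (comp (Pr (Fst (Snd X)) (Pr (Fst X) (Snd (Snd X)))))
                                      (cPair cFst (cComp cj cSnd)))).
      intros [[y w] e]. simpl in e. pose proof (Ekj w) as E. pose proof (Hcj w) as Hw.
      destruct (kj w) as [u|v].
      * simpl in E. destruct (Ha (exist _ (y, u) (eq_trans e (eq_sym E)))) as [z [Ez Hz]].
        exists z. split; [exact Ez|]. econstructor. econstructor. constructor. apply eval_p1.
        econstructor. apply eval_p2. exact Hw. apply eval_comp. simpl. repeat (first [rewrite p1_cp | rewrite p2_cp]).
        apply case0. exact Hz.
      * simpl in E. destruct (Hb (exist _ (y, v) (eq_trans e (eq_sym E)))) as [z [Ez Hz]].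
        exists z. split; [exact Ez|]. econstructor. econstructor. constructor. apply eval_p1.
        econstructor. apply eval_p2. exact Hw. apply eval_comp. simpl. repeat (first [rewrite p1_cp | rewrite p2_cp]).
        apply case1. exact Hz.
  - intros a b i Hi x m Hm. rewrite <- !(adj f Hf). apply Hi. apply frobenius. exact Hm.
Qed.

Definition vdelta (A : pasm) : var (pprod A A) :=
  Var A (fun a => ((a, a) : carrier (pprod A A))) (trk_pair _ _ _ _ _ (trk_id A) (trk_id A)).

Lemma elementary (A : pasm) : forall (X : pasm) (alpha : var (pprod X A)) (beta m : var (pprod (pprod X A) A)),
       is_meet (reindex (fun p : pprod (pprod X A) A => fst p) alpha)
               (reindex (fun p : pprod (pprod X A) A =>
                           ((snd (fst p), snd p) : carrier (pprod A A))) (vdelta A)) m ->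
       (vle m beta <->
        vle alpha (reindex (fun p : pprod X A => ((p, snd p) : carrier (pprod (pprod X A) A))) beta)).
Proof.
  intros X0 alpha beta m Hm.
  assert (He : tracked (fun p : pprod X0 A => ((p, snd p) : carrier (pprod (pprod X0 A) A))))
    by (apply trk_pair; [apply trk_id|apply trk_snd]).
  rewrite <- (adj _ He).
  assert (Heq : veq m (vsig _ He alpha)).
  { destruct (vtr_code alpha) as [ca Hca]. split.
    - destruct (proj1 (adj_ex _ _ _) (proj1 (proj1 (Hm m) (vle_refl m)))) as [c1 H1].
      destruct (proj1 (adj_ex _ _ _) (proj2 (proj1 (Hm m) (vle_refl m)))) as [c2 H2].
      apply vle_intro with c1. intro y. destruct (H1 y) as [z1 [E1 R1]].
      destruct (H2 y) as [z2 [E2 R2]]. exists z1. split; [|exact R1].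
      simpl. rewrite E1. simpl in E2. destruct (vmap m y) as [[p a1] a2]. simpl in *.
      congruence.
    - apply Hm. split.
      + apply adj_ex. exists cId. intro y. exists y. split; [reflexivity|constructor].
      + apply adj_ex. exists (cComp cSnd ca). intro y. exists (snd (vmap alpha y)).
        split; [reflexivity|]. econstructor. apply Hca. simpl.
        destruct (vmap alpha y). apply eval_p2. }
  split; intro H.
  - eapply vle_veq_l; [exact Heq|exact H].
  - eapply vle_veq_l; [split; apply Heq|exact H].
Qed.

Definition vexists {A B : pasm} (alpha : var (pprod A B)) : var A :=
  vsig (fun p : pprod A B => fst p) (trk_fst A B) alpha.

Lemma exists_ok {A B : pasm} (alpha : var (pprod A B)) : is_exists_of alpha (vexists alpha).
Proof. intro beta. apply adj. Qed.

Definition fobj {A B : pasm} (alpha : var (pprod A B)) : pasm :=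
  Pasm (fun p : {q : carrier A * nat | forall b : B, exists u : vdom alpha,
                   vmap alpha u = (fst q, b) /\ app (snd q) (realizer B b) (realizer _ u)} =>
          cpair (realizer A (fst (proj1_sig p))) (snd (proj1_sig p))).
Lemma fmap_tr {A B : pasm} (alpha : var (pprod A B)) : tracked (fun p : fobj alpha => fst (proj1_sig p)).
Proof. apply trk_intro with cFst. intro p. apply eval_p1. Qed.
Definition vforall {A B : pasm} (alpha : var (pprod A B)) : var A := Var (fobj alpha) _ (fmap_tr alpha).

Lemma forall_ok {A B : pasm} (alpha : var (pprod A B)) : is_forall_of alpha (vforall alpha).
Proof.
  intro beta. split.
  - intro H. apply vle_elim in H as [ck Hk].
    apply vle_intro with (cComp cU2 (cPair (cComp cSnd (cComp ck cSnd)) (cComp cSnd cFst))).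
    intros [[[a b] y] e]. simpl in e.
    destruct (Hk y) as [[[a0 n] Hq] [Eq Hev]]. simpl in Eq, Hev.
    destruct (Hq b) as [u [Eu Hu]]. simpl in Eu, Hu. exists u. split.
    + simpl. rewrite Eu. congruence.
    + simpl. econstructor; [|exact Hu]. constructor.
      * econstructor. econstructor. apply eval_p2. exact Hev. apply eval_p2.
      * econstructor. apply eval_p1. apply eval_p2.
  - intro H. apply vle_elim in H as [c' Hc']. destruct (vtr_code beta) as [cb Hcb].
    set (c'' := cComp c' (cPair (cPair (cComp cb cFst) cSnd) cFst)).
    apply vle_intro with (cPair cb (cPair (cconst (code_nat c'')) cId)). intro y.
    unshelve eexists (exist _ (vmap beta y, cpair (code_nat c'') (realizer _ y)) _).
    + intro b.
      destruct (Hc' (exist _ ((vmap beta y, b), y) eq_refl)) as [u [Eu Hu]].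
      exists u. split; [exact Eu|]. cbn [snd]. apply app_intro. unfold c''.
      econstructor; [|exact Hu]. simpl. constructor; [|apply eval_p1].
      constructor; [|apply eval_p2]. econstructor. apply eval_p1. apply Hcb.
    + split; [reflexivity|]. cbn [realizer fobj proj1_sig fst snd vdom vforall]. constructor; [apply Hcb|].
      constructor; [apply eval_const|constructor].
Qed.

Lemma exists_unique {A B : pasm} (alpha : var (pprod A B)) e : is_exists_of alpha e -> veq e (vexists alpha).
Proof. intro H. apply yoneda_l. intro x. rewrite (H x), (exists_ok alpha x). reflexivity. Qed.
Lemma forall_unique {A B : pasm} (alpha : var (pprod A B)) e : is_forall_of alpha e -> veq e (vforall alpha).
Proof. intro H. apply yoneda_r. intro x. rewrite (H x), (forall_ok alpha x). reflexivity. Qed.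

Lemma veq_trans {A : pasm} (a b c : var A) : veq a b -> veq b c -> veq a c.
Proof. intros [H1 H2] [H3 H4]. split; eapply vle_trans; eassumption. Qed.
Lemma veq_sym {A : pasm} (a b : var A) : veq a b -> veq b a.
Proof. intros [H1 H2]; split; assumption. Qed.
Lemma reindex_veq {A B : pasm} (f : B -> A) (Hf : tracked f) (a b : var A) :
  veq a b -> veq (reindex f a) (reindex f b).
Proof. intros [H1 H2]; split; apply reindex_mono; assumption. Qed.
Arguments cpair : simpl never.
Arguments code_nat : simpl never.
Arguments cconst : simpl never.

Lemma bc_exists_core {A B C : pasm} (f : C -> A) (Hf : tracked f) (alpha : var (pprod A B)) :
  veq (vexists (reindex (fun p : pprod C B => ((f (fst p), snd p) : carrier (pprod A B))) alpha))
      (reindex f (vexists alpha)).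
Proof.
  destruct (vtr_code alpha) as [ca Hca]. split.
  - apply adj_ex. exists cSnd. intros [[[c0 b] u] pf]. simpl in pf. exists u. split.
    + simpl. rewrite <- pf. reflexivity.
    + apply eval_p2.
  - apply vle_intro with (cPair (cPair cFst (cComp cSnd (cComp ca cSnd))) cSnd).
    intros [[c0 u] pf]. simpl in pf.
    unshelve eexists (exist _ ((c0, snd (vmap alpha u)), u) _).
    + simpl. rewrite pf. destruct (vmap alpha u); reflexivity.
    + split; [reflexivity|]. cbn [realizer pb_obj proj1_sig fst snd vdom reindex pprod].
      apply ev_pair; [apply ev_pair|apply eval_p2].
      * apply eval_p1.
      * eapply ev_comp. eapply ev_comp. apply eval_p2. apply Hca.
        cbn [realizer pprod]. apply eval_p2.
Qed.

Lemma bc_exists {A B C : pasm} (f : C -> A) (Hf : tracked f) (alpha : var (pprod A B)) (e e' : var A) (e0 : var C) :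
  is_exists_of alpha e ->
  is_exists_of (reindex (fun p : pprod C B => ((f (fst p), snd p) : carrier (pprod A B))) alpha) e0 ->
  veq e0 (reindex f e).
Proof.
  intros H1 H2. eapply veq_trans; [exact (exists_unique _ _ H2)|].
  eapply veq_trans; [exact (bc_exists_core f Hf alpha)|].
  apply reindex_veq; [exact Hf|]. apply veq_sym. exact (exists_unique _ _ H1).
Qed.

Lemma bc_forall_core {A B C : pasm} (f : C -> A) (Hf : tracked f) (alpha : var (pprod A B)) :
  veq (vforall (reindex (fun p : pprod C B => ((f (fst p), snd p) : carrier (pprod A B))) alpha))
      (reindex f (vforall alpha)).
Proof.
  destruct (trk_elim Hf) as [cf Hcf]. split.
  - set (K2 := cComp cSnd cU2).
    apply adj_ex. exists (cPair (cComp cf cFst) (cPair (cconst (code_nat K2)) cSnd)).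
    intros [[c0 n] H]. cbn [vmap vforall fst snd proj1_sig].
    unshelve eexists (exist _ (f c0, cpair (code_nat K2) n) _).
    + intro b. destruct (H b) as [[[[c1 b1] u] pf] [Et Ht]].
      cbn [vmap reindex proj1_sig fst snd] in Et, pf. injection Et as -> ->.
      exists u. split; [symmetry; exact pf|]. cbn [snd]. apply app_intro. unfold K2.
      econstructor. exact Ht. cbn [realizer pb_obj proj1_sig snd]. apply eval_p2.
    + split; [reflexivity|]. cbn [realizer fobj proj1_sig fst snd vdom vforall].
      constructor.
      * econstructor. apply eval_p1. apply Hcf.
      * constructor. apply eval_const. apply eval_p2.
  - set (K := cPair (cPair (cComp cFst cFst) cSnd) (cComp cU2 (cPair (cComp cSnd cFst) cSnd))).
    apply vle_intro with (cPair cFst (cPair (cconst (code_nat K)) (cPair cFst (cComp cSnd cSnd)))).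
    intros [[c0 [[a0 n] H]] pf]. cbn [fst snd proj1_sig vmap vforall] in pf.
    unshelve eexists (exist _ (c0, cpair (code_nat K) (cpair (realizer C c0) n)) _).
    + intro b. destruct (H b) as [u [Eu Hu]]. cbn [fst snd] in Eu, Hu.
      unshelve eexists (exist _ ((c0, b), u) _).
      * cbn [fst snd]. rewrite Eu, pf. reflexivity.
      * split; [reflexivity|]. cbn [snd]. apply app_intro. unfold K.
        cbn [realizer pb_obj proj1_sig fst snd pprod vdom reindex].
        constructor. constructor. econstructor. apply eval_p1. apply eval_p1. apply eval_p2.
        econstructor; [|exact Hu]. constructor. econstructor. apply eval_p1. apply eval_p2.
        apply eval_p2.
    + split; [reflexivity|]. cbn [realizer pb_obj fobj proj1_sig fst snd vdom vforall reindex].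
      constructor. apply eval_p1. constructor. apply eval_const.
      constructor. apply eval_p1. econstructor. apply eval_p2. apply eval_p2.
Qed.

Lemma bc_forall {A B C : pasm} (f : C -> A) (Hf : tracked f) (alpha : var (pprod A B)) (u : var A) (u0 : var C) :
  is_forall_of alpha u ->
  is_forall_of (reindex (fun p : pprod C B => ((f (fst p), snd p) : carrier (pprod A B))) alpha) u0 ->
  veq u0 (reindex f u).
Proof.
  intros H1 H2. eapply veq_trans; [exact (forall_unique _ _ H2)|].
  eapply veq_trans; [exact (bc_forall_core f Hf alpha)|].
  apply reindex_veq; [exact Hf|]. apply veq_sym. exact (forall_unique _ _ H1).
Qed.
Lemma roc (A B : pasm) (R : var (pprod A B)) :
  (forall e : var A, is_exists_of R e -> valid e) ->
  exists f : A -> B, tracked f /\ valid (reindex (fun a : A => ((a, f a) : carrier (pprod A B))) R).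
Proof.
  intro H. pose proof (H _ (exists_ok R) (vtop A)) as Ht.
  apply vle_elim in Ht as [c Hc]. destruct (vtr_code R) as [cR HcR].
  set (k := fun a : A => proj1_sig (constructive_indefinite_description _ (Hc a))).
  assert (Ek : forall a, fst (vmap R (k a)) = a /\ eval c (realizer A a) (realizer _ (k a)))
    by (intro a; exact (proj2_sig (constructive_indefinite_description _ (Hc a)))).
  exists (fun a => snd (vmap R (k a))). split.
  - apply trk_intro with (cComp cSnd (cComp cR c)). intro a. eapply ev_comp.
    eapply ev_comp. apply (Ek a). apply HcR. cbn [realizer pprod]. apply eval_p2.
  - intro y. destruct (vtr_code y) as [cy Hcy]. apply adj_ex. exists (cComp c cy).
    intro w. exists (k (vmap y w)). split.
    + destruct (Ek (vmap y w)) as [E _].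
      transitivity (fst (vmap R (k (vmap y w))), snd (vmap R (k (vmap y w))));
        [apply surjective_pairing|rewrite E; reflexivity].
    + eapply ev_comp. apply Hcy. apply Ek.
Qed.

Lemma vforall_mono {A B : pasm} (a b : var (pprod A B)) : vle a b -> vle (vforall a) (vforall b).
Proof.
  intro H. apply forall_ok. eapply vle_trans; [|exact H]. apply forall_ok. apply vle_refl.
Qed.
Lemma vexists_mono {A B : pasm} (a b : var (pprod A B)) : vle a b -> vle (vexists a) (vexists b).
Proof.
  intro H. apply exists_ok. eapply vle_trans; [exact H|]. apply exists_ok. apply vle_refl.
Qed.

Lemma ac_core (A B W : pasm) (R : var (pprod A B)) (ev : pprod W A -> B) :
  @weak_eval A B W ev ->
  vle (vforall (reindex (fun p : pprod pone A => snd p) (vexists R)))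
      (vexists (reindex (fun p : pprod pone W => snd p)
         (vforall (reindex (fun p : pprod W A => ((snd p, ev p) : carrier (pprod A B))) R)))).
Proof.
  intros [_ Hev]. destruct (vtr_code R) as [cR HcR].
  set (L := vforall (reindex (fun p : pprod pone A => snd p) (vexists R))).
  set (C := vdom L).
  set (ch := fun (c : C) (a : A) => proj1_sig (constructive_indefinite_description _ (proj2_sig c a))).
  assert (Ech : forall (c : C) (a : A), vmap _ (ch c a) = (fst (proj1_sig c), a) /\
                 app (snd (proj1_sig c)) (realizer A a) (realizer _ (ch c a)))
    by (intros c a; exact (proj2_sig (constructive_indefinite_description _ (proj2_sig c a)))).
  set (g := fun p : pprod C A => snd (vmap R (snd (proj1_sig (ch (fst p) (snd p)))))).
  assert (Hg : tracked g).
  { apply trk_intro with (cComp cSnd (cComp cR (cComp cSnd (cComp cU2 (cPair (cComp cSnd cFst) cSnd))))).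
    intros [c a]. destruct (Ech c a) as [_ Ha].
    eapply ev_comp; [|cbn [realizer pprod]; apply eval_p2].
    eapply ev_comp; [|apply HcR].
    eapply ev_comp; [|cbn [realizer pb_obj]; apply eval_p2].
    eapply ev_comp; [|exact Ha].
    cbn [realizer pprod fst snd C L vforall vdom fobj].
    constructor; [|apply eval_p2]. eapply ev_comp. apply eval_p1. apply eval_p2. }
  destruct (Hev C g Hg) as [h [Hh Eh]]. destruct (trk_elim Hh) as [chh Hchh].
  set (K' := cPair (cPair (cComp cFst cFst) cSnd) (cComp cSnd (cComp cU2 (cPair (cComp cSnd cFst) cSnd)))).
  apply vle_intro with (cPair (cPair cZero chh) (cPair chh (cPair (cconst (code_nat K')) (cPair chh cSnd)))).
  intro c.
  set (U := vforall (reindex (fun p : pprod W A => ((snd p, ev p) : carrier (pprod A B))) R)).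
  unshelve eexists (exist (fun q : carrier (pprod pone W) * carrier (vdom U) => snd (fst q) = vmap U (snd q))
     ((tt, h c), exist _ (h c, cpair (code_nat K') (cpair (realizer W (h c)) (snd (proj1_sig c)))) _) eq_refl).
  - intro a. destruct (Ech c a) as [E1 Happ].
    pose proof (eq_refl (g (c, a))) as Eg. unfold g at 2 in Eg. cbn [fst snd] in Eg.
    revert E1 Happ Eg. generalize (ch c a). intros [[[t' a'] v] pfw] E1 Happ Eg.
    cbn [vmap reindex proj1_sig fst snd] in E1, Eg, pfw. injection E1 as _ ->.
    unshelve eexists (exist _ ((h c, a), v) _).
    + cbn [fst snd]. rewrite Eh. rewrite (surjective_pairing (vmap R v)). f_equal; [exact pfw|exact Eg].
    + split; [reflexivity|]. cbn [snd]. apply app_intro. unfold K'.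
      cbn [realizer pb_obj proj1_sig fst snd pprod vdom reindex].
      constructor. constructor. eapply ev_comp. apply eval_p1. apply eval_p1. apply eval_p2.
      eapply ev_comp; [|apply eval_p2]. eapply ev_comp; [|exact Happ].
      constructor. eapply ev_comp. apply eval_p1. apply eval_p2. apply eval_p2.
  - split.
    + cbn [vmap vexists vsig]. destruct (vmap L c). reflexivity.
    + cbn [realizer pb_obj fobj proj1_sig fst snd vdom vforall reindex pprod pone vexists vsig].
      pose proof (Hchh c) as Hc. destruct c as [[t n] Hq]. cbn [fst snd proj1_sig] in *.
      constructor. constructor. constructor. exact Hc.
      constructor. exact Hc. constructor. apply eval_const. constructor. exact Hc. apply eval_p2.
Qed.

Lemma ac (A B : pasm) (R : var (pprod A B)) (W : pasm) (ev : pprod W A -> B) :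
     @weak_eval A B W ev ->
     forall (e1 : var A) (l : var pone) (u : var W) (r : var pone),
       is_exists_of R e1 ->
       is_forall_of (reindex (fun p : pprod pone A => snd p) e1) l ->
       is_forall_of (reindex (fun p : pprod W A => ((snd p, ev p) : carrier (pprod A B))) R) u ->
       is_exists_of (reindex (fun p : pprod pone W => snd p) u) r ->
       vle l r.
Proof.
  intros Hev e1 l u r H1 H2 H3 H4.
  eapply vle_trans. apply (forall_unique _ _ H2).
  eapply vle_trans. apply vforall_mono. apply reindex_mono. apply trk_snd. apply (exists_unique _ _ H1).
  eapply vle_trans. apply (ac_core A B W R ev Hev).
  eapply vle_trans. apply vexists_mono. apply reindex_mono. apply trk_snd. apply (forall_unique _ _ H3).
  apply (exists_unique _ _ H4).
Qed.

Lemma eval_iter c0 cs x n (F : nat -> nat) :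
  eval c0 x (F 0) -> (forall m, eval cs (F m) (F (S m))) ->
  eval (cRec c0 (cComp cs (cComp cSnd cSnd))) (cpair x n) (F n).
Proof.
  intros H0 HS. induction n.
  - eapply ev_rec0. apply ofnat_cp. exact H0.
  - eapply ev_recS. apply ofnat_cp. exact IHn.
    eapply ev_comp; [|apply HS]. eapply ev_comp; apply eval_p2.
Qed.

Lemma nno (A Y : pasm) (g0 : A -> Y) (gs : Y -> Y) : tracked g0 -> tracked gs ->
     exists h : pprod A pN -> Y, tracked h /\
       (forall a : A, h (a, 0) = g0 a) /\
       (forall (a : A) (n : nat), h (a, S n) = gs (h (a, n))) /\
       (forall h' : pprod A pN -> Y, tracked h' ->
          (forall a : A, h' (a, 0) = g0 a) ->
          (forall (a : A) (n : nat), h' (a, S n) = gs (h' (a, n))) ->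
          forall p, h' p = h p).
Proof.
  intros H0 Hs. destruct (trk_elim H0) as [c0 Hc0]. destruct (trk_elim Hs) as [cs Hcs].
  exists (fun p : pprod A pN => Nat.iter (snd p) gs (g0 (fst p))). split; [|split; [|split]].
  - apply trk_intro with (cRec c0 (cComp cs (cComp cSnd cSnd))). intros [a n].
    cbn [realizer pprod pN fst snd].
    apply (eval_iter _ _ _ n (fun m => realizer Y (Nat.iter m gs (g0 a)))).
    + apply Hc0.
    + intro m. apply Hcs.
  - reflexivity.
  - reflexivity.
  - intros h' _ E0 ES [a n]. cbn [fst snd]. induction n.
    + apply E0.
    + rewrite ES. change (gs (h' (a, n)) = gs (Nat.iter n gs (g0 a))). f_equal. exact IHn.
Qed.

Lemma induction_ok (A : pasm) (ph : var (pprod A pN)) :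
     valid (reindex (fun a : A => ((a, 0) : carrier (pprod A pN))) ph) ->
     vle ph (reindex (fun p : pprod A pN => ((fst p, S (snd p)) : carrier (pprod A pN))) ph) ->
     valid ph.
Proof.
  intros H0 HS.
  destruct (proj1 (adj_ex _ _ _) (H0 (vtop A))) as [c0 Hc0].
  destruct (proj1 (adj_ex _ _ _) HS) as [cs Hcs].
  set (k0 := fun a : A => proj1_sig (constructive_indefinite_description _ (Hc0 a))).
  assert (Ek0 : forall a, vmap ph (k0 a) = (a, 0) /\ eval c0 (realizer A a) (realizer _ (k0 a)))
    by (intro a; exact (proj2_sig (constructive_indefinite_description _ (Hc0 a)))).
  set (k := fun v => proj1_sig (constructive_indefinite_description _ (Hcs v))).
  assert (Ek : forall v, vmap ph (k v) = (fst (vmap ph v), S (snd (vmap ph v))) /\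
                 eval cs (realizer _ v) (realizer _ (k v)))
    by (intro v; exact (proj2_sig (constructive_indefinite_description _ (Hcs v)))).
  assert (Ei : forall a n, vmap ph (Nat.iter n k (k0 a)) = (a, n)).
  { intros a n. induction n; simpl.
    - apply Ek0.
    - rewrite (proj1 (Ek _)), IHn. reflexivity. }
  intro y. destruct (vtr_code y) as [cy Hcy].
  apply vle_intro with (cComp (cRec c0 (cComp cs (cComp cSnd cSnd))) cy). intro w.
  exists (Nat.iter (snd (vmap y w)) k (k0 (fst (vmap y w)))). split.
  - rewrite Ei. symmetry. apply surjective_pairing.
  - eapply ev_comp. apply Hcy. cbn [realizer pprod pN].
    apply (eval_iter _ _ _ _ (fun m => realizer _ (Nat.iter m k (k0 (fst (vmap y w)))))).
    + apply Ek0.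
    + intro m. apply Ek.
Qed.

Theorem lemma4p2 :
  (* ---- the base PAsm: chosen finite products ---- *)
  ((forall X : pasm, tracked (fun _ : X => (tt : carrier pone))) /\
   (forall X Y : pasm, tracked (fun p : pprod X Y => fst p) /\
                       tracked (fun p : pprod X Y => snd p)) /\
   (forall (Z X Y : pasm) (f : Z -> X) (g : Z -> Y), tracked f -> tracked g ->
      tracked (fun z : Z => ((f z, g z) : carrier (pprod X Y))))) /\
  (* ---- PAsm is weakly cartesian closed ---- *)
  (forall A B : pasm, exists (W : pasm) (ev : pprod W A -> B), @weak_eval A B W ev) /\
  (* ---- Psi is a functor PAsm^op -> InfSL (indeed into Heyting algebras) ---- *)
  (forall (A : pasm) (a : var A), veq (reindex (fun x : A => x) a) a) /\
  (forall (A B C : pasm) (f : B -> A) (g : C -> B), tracked f -> tracked g ->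
     forall a : var A, veq (reindex (fun c : C => f (g c)) a) (reindex g (reindex f a))) /\
  (* each fibre is a Heyting algebra *)
  (forall A : pasm,
     (exists t : var A, is_top t) /\ (exists b : var A, is_bot b) /\
     (forall a b : var A,
        (exists m, is_meet a b m) /\ (exists j, is_join a b j) /\ (exists i, is_imp a b i))) /\
  (* each reindexing is monotone and a Heyting homomorphism *)
  (forall (A B : pasm) (f : B -> A), tracked f ->
     (forall a b : var A, vle a b -> vle (reindex f a) (reindex f b)) /\
     (forall t : var A, is_top t -> is_top (reindex f t)) /\
     (forall b : var A, is_bot b -> is_bot (reindex f b)) /\
     (forall a b m : var A, is_meet a b m -> is_meet (reindex f a) (reindex f b) (reindex f m)) /\
     (forall a b j : var A, is_join a b j -> is_join (reindex f a) (reindex f b) (reindex f j)) /\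
     (forall a b i : var A, is_imp a b i -> is_imp (reindex f a) (reindex f b) (reindex f i))) /\
  (* ---- Psi is elementary ---- *)
  (forall A : pasm, exists delta : var (pprod A A),
     forall (X : pasm) (alpha : var (pprod X A)) (beta m : var (pprod (pprod X A) A)),
       is_meet (reindex (fun p : pprod (pprod X A) A => fst p) alpha)
               (reindex (fun p : pprod (pprod X A) A =>
                           ((snd (fst p), snd p) : carrier (pprod A A))) delta) m ->
       (vle m beta <->
        vle alpha (reindex (fun p : pprod X A => ((p, snd p) : carrier (pprod (pprod X A) A))) beta))) /\
  (* ---- left and right adjoints to reindexing along projections ---- *)
  (forall A B : pasm,
     (exists E : var (pprod A B) -> var A, forall alpha, is_exists_of alpha (E alpha)) /\
     (exists F : var (pprod A B) -> var A, forall alpha, is_forall_of alpha (F alpha))) /\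
  (* ---- Beck-Chevalley along f x id_B ---- *)
  (forall (A B C : pasm) (f : C -> A), tracked f ->
     forall (alpha : var (pprod A B)) (e e' : var _),
       is_exists_of alpha e ->
       is_exists_of (reindex (fun p : pprod C B => ((f (fst p), snd p) : carrier (pprod A B))) alpha) e' ->
       veq e' (reindex f e)) /\
  (forall (A B C : pasm) (f : C -> A), tracked f ->
     forall (alpha : var (pprod A B)) (u u' : var _),
       is_forall_of alpha u ->
       is_forall_of (reindex (fun p : pprod C B => ((f (fst p), snd p) : carrier (pprod A B))) alpha) u' ->
       veq u' (reindex f u)) /\
  (* ---- Rule of Choice ---- *)
  (forall (A B : pasm) (R : var (pprod A B)),
     (forall e : var A, is_exists_of R e -> valid e) ->
     exists f : A -> B, tracked f /\
       valid (reindex (fun a : A => ((a, f a) : carrier (pprod A B))) R)) /\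
  (* ---- Axiom of Choice on every object A ---- *)
  (forall (A B : pasm) (R : var (pprod A B)) (W : pasm) (ev : pprod W A -> B),
     @weak_eval A B W ev ->
     forall (e1 : var A) (l : var pone) (u : var W) (r : var pone),
       is_exists_of R e1 ->
       is_forall_of (reindex (fun p : pprod pone A => snd p) e1) l ->
       is_forall_of (reindex (fun p : pprod W A => ((snd p, ev p) : carrier (pprod A B))) R) u ->
       is_exists_of (reindex (fun p : pprod pone W => snd p) u) r ->
       vle l r) /\
  (* ---- arithmetic: (N, id) with 0, s is a parameterized NNO ... ---- *)
  (tracked (fun _ : pone => (0 : carrier pN)) /\ tracked (fun n : pN => (S n : carrier pN)) /\
   forall (A Y : pasm) (g0 : A -> Y) (gs : Y -> Y), tracked g0 -> tracked gs ->
     exists h : pprod A pN -> Y, tracked h /\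
       (forall a : A, h (a, 0) = g0 a) /\
       (forall (a : A) (n : nat), h (a, S n) = gs (h (a, n))) /\
       (forall h' : pprod A pN -> Y, tracked h' ->
          (forall a : A, h' (a, 0) = g0 a) ->
          (forall (a : A) (n : nat), h' (a, S n) = gs (h' (a, n))) ->
          forall p, h' p = h p)) /\
  (* ---- ... satisfying induction in Psi ---- *)
  (forall (A : pasm) (ph : var (pprod A pN)),
     valid (reindex (fun a : A => ((a, 0) : carrier (pprod A pN))) ph) ->
     vle ph (reindex (fun p : pprod A pN => ((fst p, S (snd p)) : carrier (pprod A pN))) ph) ->
     valid ph).
Proof.
  split; [split; [apply trk_unit|split; [intros; split; [apply trk_fst|apply trk_snd]|apply trk_pair]]|].
  split; [intros A B; exists (Wobj A B), (wev A B); apply wev_ok|].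
  split; [intros A a; apply reindex_id|].
  split; [intros A B C f g Hf Hg a; apply reindex_comp; assumption|].
  split.
  { intro A. split; [exists (vtop A); apply top_ok|]. split; [exists (vbot A); apply bot_ok|].
    intros a b. split; [exists (vmeet a b); apply meet_ok|].
    split; [exists (vjoin a b); apply join_ok|exists (vimp a b); apply imp_ok]. }
  split; [intros A B f Hf; apply reindex_heyting; assumption|].
  split; [intro A; exists (vdelta A); apply elementary|].
  split; [intros A B; split; [exists vexists; apply exists_ok|exists vforall; apply forall_ok]|].
  split; [intros A B C f Hf alpha e e' H1 H2; eapply bc_exists; eassumption|].
  split; [intros A B C f Hf alpha u u' H1 H2; eapply bc_forall; eassumption|].
  split; [apply roc|].
  split; [apply ac|].
  split.
  { split; [apply trk_intro with cZero; intro; constructor|].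
    split; [apply trk_intro with cSucc; intro; constructor|].
    apply nno. }
  apply induction_ok.
Qed.
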